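(* Let $\mathbf u$ be an infinite word over a finite alphabet whose language is closed under reversal and whose defect $D(\mathbf u)$ is finite. Let $q$ be a prefix of $\mathbf u$ such that $D(\mathbf u)=D(q)$, and put $H=|q|+1$. Then $$\mathcal C_{\mathbf u}(H)-\mathcal P_{\mathbf u}(H)=2\,\#\{x\in\mathcal L(\mathbf u): x \text{ is a palindrome},\ |x|<H,\ x\notin\mathcal L(q)\}.$$
   Context: For a finite word $w=w_0\cdots w_{n-1}$ its reversal is $\overline{w}=w_{n-1}\cdots w_0$; $w$ is a palindrome if $w=\overline{w}$ (the empty word is a palindrome). $\mathcal L(v)$ denotes the set of factors of a (finite or infinite) word $v$, and $\mathcal L_n(v)$ those of length $n$; the language of $\mathbf u$ is closed under reversal if $w\in\mathcal L(\mathbf u)$ implies $\overline w\in\mathcal L(\mathbf u)$. $\mathcal C_{\mathbf u}(n)=\#\mathcal L_n(\mathbf u)$ and $\mathcal P_{\mathbf u}(n)$ is the number of palindromes in $\mathcal L_n(\mathbf u)$. The defect of a finite word $w$ is $D(w)=|w|+1-(\text{number of distinct palindromic factors of } w, \text{ including the empty word})$; the defect of an infinite word is $D(\mathbf u)=\sup\{D(w): w \text{ a prefix of } \mathbf u\}$. *)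

(* Defs.v *)
From mathcomp Require Import all_boot.
From mathcomp Require Import boolp.
Set Implicit Arguments. Unset Strict Implicit. Unset Printing Implicit Defensive.

Definition is_pal (A : eqType) (w : seq A) : bool := w == rev w.

Definition factor (A : Type) (u : nat -> A) (w : seq A) : Prop :=
  exists i, w = mkseq (fun j => u (i + j)) (size w).

Definition pref (A : Type) (u : nat -> A) (n : nat) : seq A := mkseq u n.

Definition closed_under_reversal (A : Type) (u : nat -> A) : Prop :=
  forall w, factor u w -> factor u (rev w).

(* number of distinct palindromic factors of the finite word w,
   including the empty word (counted length by length) *)
Definition npal (A : finType) (w : seq A) : nat :=
  \sum_(n < (size w).+1) #|[set t : n.-tuple A | infix (tval t) w && is_pal (tval t)]|.

Definition defect (A : finType) (w : seq A) : nat := (size w).+1 - npal w.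

Definition cplx (A : finType) (u : nat -> A) (n : nat) : nat :=
  #|[set t : n.-tuple A | `[< factor u (tval t) >] ]|.

Definition pcplx (A : finType) (u : nat -> A) (n : nat) : nat :=
  #|[set t : n.-tuple A | `[< factor u (tval t) >] && is_pal (tval t)]|.

(* Main.v *)
Require Import Defs.
From mathcomp Require Import all_boot.
From mathcomp Require Import boolp.
From mathcomp Require Import zify.
Set Implicit Arguments. Unset Strict Implicit. Unset Printing Implicit Defensive.

Section Words.
Variable A : eqType.
Implicit Types x y s w : seq A.

Lemma suffix_eq_size x y s : suffix x s -> suffix y s -> size x = size y -> x = y.
Proof. by rewrite !suffixE => /eqP Ex /eqP Ey E; rewrite -Ex -Ey E. Qed.

Lemma suffix_le x y s : suffix x s -> suffix y s -> size x <= size y -> suffix x y.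
Proof.
move=> /suffixP[s1 E1] /suffixP[s2 E2] Hle.
have Ex : x = drop (size s1) s by rewrite E1 drop_size_cat.
have Ey : y = drop (size s2) s by rewrite E2 drop_size_cat.
have Hs : size s1 + size x = size s2 + size y.
  by rewrite -!size_cat -E1 -E2.
rewrite Ex Ey; have -> : size s1 = (size s1 - size s2) + size s2 by lia.
by rewrite -drop_drop suffix_drop.
Qed.

Lemma pal_rev x : is_pal x -> rev x = x.
Proof. by move/eqP. Qed.

Lemma pal_suffix_prefix x y : is_pal x -> is_pal y -> suffix x y -> prefix x y.
Proof. by move=> /pal_rev Hx /pal_rev Hy; rewrite -prefix_rev Hx Hy. Qed.

Lemma newpal_uniq w a x y :
  suffix x (rcons w a) -> suffix y (rcons w a) -> is_pal x -> is_pal y ->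
  ~~ infix x w -> ~~ infix y w -> x = y.
Proof.
wlog Hxy : x y / size x <= size y.
  move=> W Hx Hy px py nx ny; case: (leqP (size x) (size y)) => H.
    exact: W.
  by apply/esym/W => //; apply: ltnW.
move=> Hx Hy px py nx ny.
case: (ltngtP (size x) (size y)) => Hs; last exact: suffix_eq_size Hx Hy Hs.
  have /prefixP[r Er] := pal_suffix_prefix px py (suffix_le Hx Hy Hxy).
  case/suffixP: Hy => p Ep.
  case/lastP: r Er => [|r b] Er.
    by move: Hs; rewrite Er cats0 ltnn.
  move: Ep; rewrite Er catA -rcons_cat => /rcons_inj[Ew _].
  by case/negP: nx; rewrite Ew -catA infix_infix.
by move: Hs; rewrite ltnNge Hxy.
Qed.

Lemma suffix_take x s k : suffix x s -> k <= size x ->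
  suffix (take k x) (take (size s - size x + k) s).
Proof.
move=> /suffixP[s1 E] Hk; rewrite E size_cat addnK take_cat ltnNge leq_addr /=.
by rewrite addKn suffix_suffix.
Qed.
End Words.

Section Npal.
Variable A : finType.
Implicit Types x y s w : seq A.

Definition Sset w n := [set t : n.-tuple A | infix (tval t) w && is_pal (tval t)].
Definition Nset w a n :=
  [set t : n.-tuple A | [&& suffix (tval t) (rcons w a), is_pal (tval t) & ~~ infix (tval t) w]].

Lemma npalE w : npal w = \sum_(n < (size w).+1) #|Sset w n|.
Proof. by []. Qed.

Lemma S_step w a n : #|Sset (rcons w a) n| <= #|Sset w n| + #|Nset w a n|.
Proof.
apply: leq_trans (leq_card_setU _ _).
apply: subset_leq_card; apply/subsetP => t; rewrite !inE infix_rconsl.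
case/andP => /orP[Hs|Hi] Hp; last by rewrite Hi Hp.
by case: (infix (tval t) w); rewrite ?Hs ?Hp ?orbT.
Qed.

Lemma N_card1 w a n : #|Nset w a n| <= 1.
Proof.
apply/card_le1_eqP => t1 t2; rewrite !inE => /and3P[s1 p1 n1] /and3P[s2 p2 n2].
by apply: val_inj; apply: (newpal_uniq s2 s1).
Qed.

Lemma N_sum w a K : \sum_(n < K) #|Nset w a n| <= 1.
Proof.
case: (pickP (fun n : 'I_K => Nset w a n != set0)) => [n0 Hn0 | H0]; last first.
  by rewrite big1 // => n _; apply/eqP; rewrite cards_eq0; move: (H0 n) => /= /negbFE.
rewrite (bigD1 n0) //= big1 ?addn0 ?N_card1 // => n Hn.
apply/eqP; rewrite cards_eq0; move: Hn; apply: contraNT => /set0Pn[t1].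
move/set0Pn: Hn0 => [t0].
rewrite !inE => /and3P[s0 p0 n0'] /and3P[s1 p1 n1].
have E := newpal_uniq s0 s1 p0 p1 n0' n1.
apply/eqP; apply: val_inj => /=.
by rewrite -(size_tuple t0) -(size_tuple t1) E.
Qed.

Lemma Sset_big w n : size w < n -> #|Sset w n| = 0.
Proof.
move=> H; apply/eqP; rewrite cards_eq0; apply/eqP/setP => t; rewrite !inE.
apply/negbTE/negP => /andP[/size_infix]; rewrite size_tuple => H'.
by move: (leq_ltn_trans H' H); rewrite ltnn.
Qed.

Lemma npal_step_gen w a :
  npal (rcons w a) <= npal w + \sum_(n < (size w).+2) #|Nset w a n|.
Proof.
rewrite !npalE size_rcons.
have E : \sum_(n < (size w).+1) #|Sset w n| = \sum_(n < (size w).+2) #|Sset w n|.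
  by rewrite [RHS]big_ord_recr /= Sset_big ?addn0.
by rewrite E -big_split /=; apply: leq_sum => n _; exact: S_step.
Qed.

Lemma npal_step w a : npal (rcons w a) <= (npal w).+1.
Proof. apply: leq_trans (npal_step_gen w a) _; have := N_sum w a (size w).+2; lia. Qed.

Lemma npal_step0 w a :
  (forall x, infix x (rcons w a) -> is_pal x -> infix x w) ->
  npal (rcons w a) <= npal w.
Proof.
move=> Hn; apply: leq_trans (npal_step_gen w a) _.
rewrite big1 ?addn0 // => n _; apply/eqP; rewrite cards_eq0; apply/eqP/setP => t.
rewrite !inE; apply/negbTE/and3P => -[Hs Hp Hi].
by case/negP: Hi; apply: Hn => //; apply: suffixW.
Qed.

Lemma npal_le w : npal w <= (size w).+1.
Proof.
elim/last_ind: w => [|w a IH].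
  rewrite npalE big_ord1; apply: leq_trans (max_card _) _.
  by rewrite card_tuple.
by apply: leq_trans (npal_step w a) _; rewrite size_rcons.
Qed.

Lemma defect_mono w a : defect w <= defect (rcons w a).
Proof. rewrite /defect size_rcons; have := npal_step w a; lia. Qed.

Lemma defect_strict w a :
  (forall x, infix x (rcons w a) -> is_pal x -> infix x w) ->
  defect w < defect (rcons w a).
Proof.
move=> Hn; rewrite /defect size_rcons; have := npal_step0 Hn; have := npal_le w; lia.
Qed.
End Npal.
From mathcomp Require Import all_boot.
From mathcomp Require Import boolp.
From mathcomp Require Import zify.
Set Implicit Arguments. Unset Strict Implicit. Unset Printing Implicit Defensive.

Section Inf.
Variable A : finType.
Variable u : nat -> A.
Implicit Types x y s w : seq A.

Lemma pref_S e : pref u e.+1 = rcons (pref u e) (u e).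
Proof. exact: mkseqS. Qed.

Lemma size_pref e : size (pref u e) = e.
Proof. exact: size_mkseq. Qed.

Lemma pref_split i k : pref u (i + k) = pref u i ++ mkseq (fun j => u (i + j)) k.
Proof.
elim: k => [|k IH]; first by rewrite addn0 cats0.
by rewrite addnS pref_S IH mkseqS rcons_cat.
Qed.

Lemma pref_prefix e e' : e <= e' -> prefix (pref u e) (pref u e').
Proof. by move=> H; rewrite -(subnKC H) pref_split prefix_prefix. Qed.

Lemma infix_mono x e e' : e <= e' -> infix x (pref u e) -> infix x (pref u e').
Proof. by move=> H Hx; apply: infix_prefix_trans Hx (pref_prefix H). Qed.

Lemma take_pref k e : k <= e -> take k (pref u e) = pref u k.
Proof. by move=> H; rewrite -(subnKC H) pref_split take_size_cat ?size_pref. Qed.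

Lemma factorP w : factor u w <-> exists e, infix w (pref u e).
Proof.
split=> [[i E]|[e /infixP[s [s' E]]]].
  by exists (i + size w); rewrite pref_split -E suffix_infix.
exists (size s).
have Hle : size s + size w <= e.
  by have := size_pref e; rewrite E !size_cat => <-; rewrite leq_add2l leq_addr.
have E1 := take_pref Hle; rewrite E catA take_size_cat in E1; last by rewrite size_cat.
have E2 := take_pref (leq_trans (leq_addr _ _) Hle); rewrite E take_size_cat // in E2.
move: E1; rewrite pref_split -E2.
by move/(congr1 (drop (size s))); rewrite !drop_size_cat.
Qed.

Definition fe w : nat :=
  if pselect (exists e, infix w (pref u e)) is left P then ex_minn P else 0.

Lemma feP w : factor u w ->
  infix w (pref u (fe w)) /\ (forall e, infix w (pref u e) -> fe w <= e).
Proof.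
move/factorP=> Hw; rewrite /fe; case: pselect => // P.
by case: ex_minnP.
Qed.

Lemma fe_eq w e : infix w (pref u e) -> (forall e', infix w (pref u e') -> e <= e') ->
  fe w = e.
Proof.
move=> H1 H2; have Hf : factor u w by apply/factorP; exists e.
case: (feP Hf) => Hi Hm; apply/eqP; rewrite eqn_leq Hm //=; exact: H2.
Qed.

Lemma fe_suffix w : factor u w -> w != [::] ->
  size w <= fe w /\ suffix w (pref u (fe w)).
Proof.
move=> Hf Hn; case: (feP Hf) => Hi Hm.
have Hs : suffix w (pref u (fe w)).
  move: Hi Hm; case: (fe w) => [|e].
    by rewrite /pref /mkseq /= (negbTE Hn).
  by rewrite pref_S infix_rconsl => /orP[//|Hi] /(_ _ Hi); rewrite ltnn.
by split=> //; have := size_infix (suffixW Hs); rewrite size_pref.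
Qed.

Definition sfx e k := mkseq (fun j => u (e - k + j)) k.

Lemma sfx_suffix e k : k <= e -> suffix (sfx e k) (pref u e).
Proof. by move=> H; rewrite -{2}(subnK H) pref_split suffix_suffix. Qed.

Lemma suffix_pref_take y e k : suffix y (pref u e) -> k <= size y ->
  suffix (take k y) (pref u (e - size y + k)).
Proof.
move=> Hs Hk; have Hy : size y <= e by rewrite -(size_pref e) size_infix // suffixW.
have Hle : e - size y + k <= e by lia.
by have := suffix_take Hs Hk; rewrite size_pref take_pref.
Qed.

Lemma suffix_pref_size y e : suffix y (pref u e) -> size y <= e.
Proof. by move=> Hs; rewrite -(size_pref e) size_infix // suffixW. Qed.

End Inf.
From mathcomp Require Import all_boot.
From mathcomp Require Import boolp.
From mathcomp Require Import zify.
Set Implicit Arguments. Unset Strict Implicit. Unset Printing Implicit Defensive.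

Section Main.
Variable A : finType.
Variable u : nat -> A.
Variable m : nat.
Hypothesis Hrev : closed_under_reversal u.
Hypothesis HD : forall n, defect (pref u n) <= defect (pref u m).
Implicit Types x y s w : seq A.

Lemma defect_pref_mono n : m <= n -> defect (pref u m) <= defect (pref u n).
Proof.
elim: n => [|n IH]; first by rewrite leqn0 => /eqP->.
rewrite leq_eqVlt => /orP[/eqP->//|Hm].
by apply: leq_trans (IH Hm) _; rewrite pref_S defect_mono.
Qed.

Lemma newpal_exists e : m <= e ->
  exists x, [/\ is_pal x, suffix x (pref u e.+1) & ~~ infix x (pref u e)].
Proof.
move=> He; apply: contrapT => Hn.
have Hs : defect (pref u e) < defect (pref u e.+1).
  rewrite pref_S; apply: defect_strict => x.
  rewrite infix_rconsl => /orP[Hsx|//] Hp.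
  case Hi: (infix x (pref u e)) => //; case: Hn; exists x.
  by rewrite -pref_S in Hsx; rewrite Hi.
have := HD e.+1; have := defect_pref_mono He; lia.
Qed.

Lemma rev_factor w : factor u (rev w) = factor u w.
Proof.
by apply: propext; split=> [H|]; [rewrite -(revK w); apply: Hrev | apply: Hrev].
Qed.

Lemma is_pal_rev w : is_pal (rev w) = is_pal w.
Proof. by rewrite /is_pal revK eq_sym. Qed.

Lemma G1 x : factor u x -> is_pal x -> ~~ infix x (pref u m) -> size x < m.+1 ->
  let w := sfx u (fe u x) m.+1 in
  [/\ factor u w, ~~ is_pal w, fe u w = fe u x & fe u w < fe u (rev w)].
Proof.
move=> Hf Hp Hq Hs w.
have Hx0 : x != [::] by apply: contraNneq Hq => ->; rewrite infix0s.
case: (fe_suffix Hf Hx0) => Hxs Hsx.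
case: (feP Hf) => _ Hmin.
set e := fe u x in Hxs Hsx Hmin w *.
have Hme : m < e.
  rewrite ltnNge; apply: contra Hq => Hle; exact: infix_mono Hle (suffixW Hsx).
have Hw : suffix w (pref u e) by apply: sfx_suffix.
have Hsw : size w = m.+1 by rewrite size_mkseq.
have Hxw : suffix x w by apply: suffix_le Hsx Hw _; rewrite Hsw ltnW.
have Hfw : factor u w by apply/factorP; exists e; apply: suffixW.
have Hfe : fe u w = e.
  apply: fe_eq; first exact: suffixW.
  by move=> e' He'; apply: Hmin; apply: infix_trans He'; apply: suffixW.
have Hpre : take (size x) (rev w) = x.
  by apply/eqP; rewrite -prefixE -{1}(pal_rev Hp) prefix_rev.
split=> //.
  apply/negP => Hpw.
  have := suffix_pref_take Hw (k := size x); rewrite Hsw => /(_ (ltnW Hs)).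
  rewrite -{1}(pal_rev Hpw) Hpre => /suffixW /Hmin; lia.
have Hfr : factor u (rev w) by rewrite rev_factor.
have Hr0 : rev w != [::] by rewrite -size_eq0 size_rev Hsw.
case: (fe_suffix Hfr Hr0) => Hrs Hsr.
have := suffix_pref_take Hsr (k := size x); rewrite size_rev Hsw Hpre.
rewrite size_rev Hsw in Hrs.
move=> /(_ (ltnW Hs)) /suffixW /Hmin; rewrite Hfe; lia.
Qed.


Lemma fe_min x e : factor u x -> infix x (pref u e) -> fe u x <= e.
Proof. by move=> Hf; case: (feP Hf) => _; apply. Qed.

Lemma G2 x y :
  factor u x -> is_pal x -> ~~ infix x (pref u m) -> size x < m.+1 ->
  factor u y -> is_pal y -> ~~ infix y (pref u m) -> size y < m.+1 ->
  sfx u (fe u x) m.+1 = sfx u (fe u y) m.+1 -> x = y.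
Proof.
move=> Hfx Hpx Hqx Hsx Hfy Hpy Hqy Hsy E.
have [_ _ Ex _] := G1 Hfx Hpx Hqx Hsx.
have [_ _ Ey _] := G1 Hfy Hpy Hqy Hsy.
have Hexy : fe u x = fe u y by rewrite -Ex -Ey E.
have Hx0 : x != [::] by apply: contraNneq Hqx => ->; rewrite infix0s.
have Hy0 : y != [::] by apply: contraNneq Hqy => ->; rewrite infix0s.
case: (fe_suffix Hfx Hx0) => Hxs Hsx'.
case: (fe_suffix Hfy Hy0) => Hys Hsy'.
rewrite -Hexy in Hsy'.
have Hme : m < fe u x.
  rewrite ltnNge; apply: contra Hqx => Hle; exact: infix_mono Hle (suffixW Hsx').
move: Hsx' Hsy' Hexy; case Ee: (fe u x) Hme => [//|e] Hme Hsx' Hsy' Hexy.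
rewrite pref_S in Hsx' Hsy'.
apply: (newpal_uniq Hsx' Hsy' Hpx Hpy).
  by apply/negP => /(fe_min Hfx); rewrite Ee ltnn.
by apply/negP => /(fe_min Hfy); rewrite -Hexy ltnn.
Qed.

Lemma G3 w : factor u w -> size w = m.+1 -> ~~ is_pal w -> fe u w < fe u (rev w) ->
  exists x, [/\ factor u x, is_pal x, ~~ infix x (pref u m), size x < m.+1 &
    sfx u (fe u x) m.+1 = w].
Proof.
move=> Hfw Hsw Hnp Hlt.
have Hw0 : w != [::] by rewrite -size_eq0 Hsw.
case: (fe_suffix Hfw Hw0) => Hws Hsw'.
have Hfr : factor u (rev w) by rewrite rev_factor.
move: Hws Hsw' Hlt; set e := fe u w; rewrite Hsw.
case Ee: e => [//|e'] Hws Hsw' Hlt.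
have [x [Hp Hsx Hnx]] := newpal_exists (Hws : m <= e').
have Hfx : factor u x by apply/factorP; exists e'.+1; apply: suffixW.
have Hfe : fe u x = e'.+1.
  apply: fe_eq; first exact: suffixW.
  move=> e'' Hi; rewrite ltnNge; apply/negP => Hle.
  by case/negP: Hnx; apply: infix_mono Hle Hi.
have Hxs : size x < m.+1.
  rewrite ltnNge; apply/negP => Hle.
  have Hwx : suffix w x by apply: suffix_le Hsw' Hsx _; rewrite Hsw.
  have Hpre : take m.+1 x = rev w.
    by apply/eqP; rewrite -Hsw -size_rev -prefixE -(pal_rev Hp) prefix_rev.
  have Hxe := suffix_pref_size Hsx.
  have := suffix_pref_take Hsx (k := m.+1) Hle; rewrite Hpre.
  move=> /suffixW /(fe_min Hfr); lia.
exists x; split=> //.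
  by apply/negP => Hi; case/negP: Hnx; apply: infix_mono Hi; rewrite -ltnS.
rewrite Hfe; apply: (suffix_eq_size (sfx_suffix _ Hws) Hsw').
by rewrite size_mkseq.
Qed.

Lemma trich t : factor u t -> size t = m.+1 -> fe u t = fe u (rev t) -> is_pal t.
Proof.
move=> Hf Hs E.
have Hfr : factor u (rev t) by rewrite rev_factor.
have H0 : t != [::] by rewrite -size_eq0 Hs.
have Hr0 : rev t != [::] by rewrite -size_eq0 size_rev Hs.
case: (fe_suffix Hf H0) => _ H1; case: (fe_suffix Hfr Hr0) => _ H2.
rewrite -E in H2; apply/eqP; apply: (suffix_eq_size H1 H2).
by rewrite size_rev.
Qed.

End Main.
From mathcomp Require Import all_boot.
From mathcomp Require Import boolp.
From mathcomp Require Import zify.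
Set Implicit Arguments. Unset Strict Implicit. Unset Printing Implicit Defensive.

Lemma bigcup_card (T : finType) K (B : 'I_K -> {set T}) :
  (forall i j x, x \in B i -> x \in B j -> i = j) ->
  #|\bigcup_(i < K) B i| = \sum_(i < K) #|B i|.
Proof.
elim: K B => [|K IH] B HB; first by rewrite !big_ord0 cards0.
rewrite !big_ord_recr /= cardsU IH; last first.
  by move=> i j x Hi Hj; apply: val_inj; have := HB _ _ _ Hi Hj => /(congr1 val).
have -> : (\bigcup_(i < K) B (widen_ord (leqnSn K) i)) :&: B ord_max = set0.
  apply/setP => x; rewrite !inE; apply/negbTE/andP => -[/bigcupP[i _ Hi] Hm].
  have := HB _ _ _ Hi Hm => /(congr1 val) /= Hv.
  by move: (ltn_ord i); rewrite Hv ltnn.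
by rewrite cards0 subn0.
Qed.

Definition phiT (A : finType) (u : nat -> A) (m : nat) (x : seq A) : m.+1.-tuple A :=
  @Tuple m.+1 A (sfx u (fe u x) m.+1) (introT eqP (size_mkseq _ _)).

Theorem lemma9 (A : finType) (u : nat -> A) (m : nat) :
  closed_under_reversal u ->
  (* D(u) is finite *)
  (exists B, forall n, defect (pref u n) <= B) ->
  (* q = pref u m satisfies D(u) = D(q), i.e. sup_n D(pref u n) = D(q) *)
  (forall n, defect (pref u n) <= defect (pref u m)) ->
  let q := pref u m in
  let H := (size q).+1 in
  cplx u H - pcplx u H =
  2 * \sum_(n < H)
        #|[set t : n.-tuple A |
            [&& `[< factor u (tval t) >], is_pal (tval t) & ~~ infix (tval t) q]]|.
Proof.
move=> Hrev _ HD q H; subst q H; rewrite size_pref.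
pose T := fun n : nat => [set t : n.-tuple A |
            [&& `[< factor u (tval t) >], is_pal (tval t) & ~~ infix (tval t) (pref u m)]].
set W := [set t : m.+1.-tuple A | `[< factor u (tval t) >] && ~~ is_pal (tval t)].
set P := [set t : m.+1.-tuple A | is_pal (tval t)].
set F := [set t : m.+1.-tuple A | `[< factor u (tval t) >]].
have E1 : cplx u m.+1 - pcplx u m.+1 = #|W|.
  have -> : pcplx u m.+1 = #|F :&: P| by apply: eq_card => t; rewrite !inE.
  have -> : W = F :\: P by apply/setP => t; rewrite !inE andbC.
  have -> : cplx u m.+1 = #|F| by [].
  by rewrite -(cardsID P F) addKn.
set W1 := [set t in W | fe u (tval t) < fe u (rev (tval t))].
set W2 := [set t in W | fe u (rev (tval t)) < fe u (tval t)].
have E2 : #|W| = #|W1| + #|W2|.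
  rewrite -(cardsID [set t : m.+1.-tuple A | fe u (tval t) < fe u (rev (tval t))] W).
  congr (_ + _); apply: eq_card => t; rewrite !inE; first by rewrite andbC.
  case Hf: `[< factor u (tval t) >]; case Hnp: (is_pal (tval t)); rewrite /= ?andbF //.
  move/asboolP: Hf => Hf.
  case: ltngtP => // Heq; move/negbT/negP: Hnp; case; apply: (trich Hrev) => //.
  by rewrite size_tuple.
have E3 : #|W2| = #|W1|.
  have -> : W2 = [set rev_tuple t | t in W1].
    apply/setP => t; apply/idP/imsetP.
      rewrite !inE => /andP[/andP[/asboolP Hf Hnp] Hlt].
      exists (rev_tuple t); last by apply: val_inj; rewrite /= revK.
      by rewrite /W1 /W !inE /= revK (rev_factor Hrev) is_pal_rev Hnp Hlt !andbT; apply/asboolP.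
    move=> [t' Ht' ->]; move: Ht'; rewrite /W1 /W2 /W !inE /= revK (rev_factor Hrev) is_pal_rev.
    by [].
  by apply: card_imset => t1 t2 /(congr1 val) /= /(congr1 rev); rewrite !revK => /val_inj.
have E4 : #|W1| = \sum_(n < m.+1) #|T n|.
  have -> : W1 = \bigcup_(n < m.+1) [set phiT u m (tval t) | t in T n].
    apply/setP => w; apply/idP/bigcupP.
      rewrite !inE => /andP[/andP[/asboolP Hf Hnp] Hlt].
      have [x [Hfx Hpx Hqx Hsx Ex]] := G3 Hrev HD Hf (size_tuple w) Hnp Hlt.
      exists (Ordinal Hsx) => //; apply/imsetP; exists (in_tuple x).
        by rewrite /T inE /=; apply/and3P; split => //; apply/asboolP.
      by apply: val_inj; rewrite /= Ex.
    move=> [n _ /imsetP[t]]; rewrite /T !inE => /and3P[/asboolP Hf Hp Hq] ->.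
    have Hs : size (tval t) < m.+1 by rewrite size_tuple.
    have [Hfw Hnp Hfe Hlt] := G1 Hrev Hf Hp Hq Hs.
    by rewrite /phiT /= Hnp Hlt !andbT; apply/asboolP.
  rewrite bigcup_card.
    apply: eq_bigr => n _; apply: card_in_imset => t1 t2.
    rewrite !inE => /and3P[/asboolP Hf1 Hp1 Hq1] /and3P[/asboolP Hf2 Hp2 Hq2].
    move=> /(congr1 val) /= E; apply: val_inj.
    have Hs1 : size (tval t1) < m.+1 by rewrite size_tuple.
    have Hs2 : size (tval t2) < m.+1 by rewrite size_tuple.
    by have := G2 Hrev Hf1 Hp1 Hq1 Hs1 Hf2 Hp2 Hq2 Hs2 E.
  move=> i j w /imsetP[t1 + ->] /imsetP[t2 +].
  rewrite /T !inE => /and3P[/asboolP Hf1 Hp1 Hq1] /and3P[/asboolP Hf2 Hp2 Hq2].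
  move=> /(congr1 val) /= E; apply: val_inj.
  have Hs1 : size (tval t1) < m.+1 by rewrite size_tuple.
  have Hs2 : size (tval t2) < m.+1 by rewrite size_tuple.
  have := G2 Hrev Hf1 Hp1 Hq1 Hs1 Hf2 Hp2 Hq2 Hs2 E.
  by move/(congr1 size); rewrite !size_tuple.
by rewrite E1 E2 E3 E4 addnn -mul2n.
Qed.
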